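(* Let $G$ be a graph and $k$ an integer, and assume: (A) $G$ contains no two adjacent vertices $u,w$ with $N(w)\subseteq N[u]$; and (B) there is no vertex $w$ of $G$ together with a partition $(C_1,C_2)$ of $N(w)$ such that $|C_1|\ge|C_2|$, $C_1$ and $C_2$ are cliques, and every vertex $c_1\in C_1$ lies in exactly one pair $\{c_1,c_2\}$ with $c_2\in C_2$ and $\{c_1,c_2\}\notin E(G)$. Let $v$ be a vertex of degree three with $N(v)=\{a,b,c\}$. Let $G'$ be the graph with vertex set $V(G)\setminus\{v\}$ whose edge set consists of the edges of $G-v$ together with the set $F$ of pairs $\{a,b\}$, $\{b,c\}$, $\{a,x\}$ for $x\in N_G(b)$, $\{b,y\}$ for $y\in N_G(c)$, and $\{c,z\}$ for $z\in N_G(a)$ (pairs containing $v$ being omitted). Then $G$ has a vertex cover of size $k$ if and only if $G'$ has a vertex cover of size $k$.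
   Context: All graphs are finite, simple, undirected. $N(x)=N_G(x)$ is the open and $N[x]=N(x)\cup\{x\}$ the closed neighborhood. A clique is a set of pairwise adjacent vertices. A vertex cover is a set of vertices containing at least one endpoint of every edge; ''has a vertex cover of size $k$'' means has a vertex cover of size at most $k$. *)

(* Defs.v *)
From mathcomp Require Import all_boot.
Set Implicit Arguments. Unset Strict Implicit. Unset Printing Implicit Defensive.

Section Graphs.
Variable T : finType.
Implicit Types (e : rel T) (S : {set T}).

Definition N e (x : T) : {set T} := [set y | e x y].
Definition Nc e (x : T) : {set T} := x |: N e x.

Definition simple_graph e := symmetric e /\ irreflexive e.

Definition clique e S := forall x y, x \in S -> y \in S -> x != y -> e x y.

Definition vertex_cover e S := forall x y, e x y -> (x \in S) || (y \in S).

(* "has a vertex cover of size k" = of size at most k *)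
Definition has_vc e (k : nat) := exists S : {set T}, vertex_cover e S /\ #|S| <= k.

Definition condA e := ~ exists u w, e u w /\ N e w \subset Nc e u.

Definition condB e :=
  ~ exists w (C1 C2 : {set T}),
      [/\ C1 :|: C2 = N e w, [disjoint C1 & C2], #|C2| <= #|C1|,
          clique e C1 /\ clique e C2 &
          forall c1, c1 \in C1 -> #|[set c2 in C2 | ~~ e c1 c2]| = 1].
End Graphs.

(* The set F of new pairs (as an ordered test; symmetrized below). *)
Definition Fpair (T : finType) (e : rel T) (a b c : T) (p q : T) : bool :=
  [|| (p == a) && (q == b), (p == b) && (q == c),
      (p == a) && e b q, (p == b) && e c q | (p == c) && e a q].

Definition Gprime (T : finType) (e : rel T) (v a b c : T) :
    rel {x : T | x != v} :=
  fun x y => (val x != val y) &&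
    [|| e (val x) (val y), Fpair e a b c (val x) (val y)
      | Fpair e a b c (val y) (val x)].
Arguments Gprime {T} e v a b c.

(* Main.v *)
Require Import Defs.
From mathcomp Require Import all_boot.

Section Main.
Variables (T : finType) (e : rel T) (v a b c : T).
Hypothesis esym : symmetric e.
Hypothesis eirr : irreflexive e.
Hypothesis Nv : forall x, e v x = [|| x == a, x == b | x == c].
Hypothesis nab : ~~ e a b.
Hypothesis nbc : ~~ e b c.
Hypothesis nac : ~~ e a c.
Hypotheses (dab : a != b) (dbc : b != c) (dac : a != c).

Lemma av : a != v. Proof. by apply/eqP=> E; move: (Nv a); rewrite eqxx -E eirr. Qed.
Lemma bv : b != v. Proof. by apply/eqP=> E; move: (Nv b); rewrite eqxx orbT -E eirr. Qed.
Lemma cv : c != v. Proof. by apply/eqP=> E; move: (Nv c); rewrite eqxx !orbT -E eirr. Qed.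

Definition P (S0 : {set T}) := forall x y, x != v -> y != v -> x != y ->
  [|| e x y, Fpair e a b c x y | Fpair e a b c y x] -> (x \in S0) || (y \in S0).

Definition C1 (S0 : {set T}) := forall x y, x != v -> y != v -> e x y -> (x \in S0) || (y \in S0).

Lemma P_intro S0 : C1 S0 -> (a \in S0) || (b \in S0) -> (b \in S0) || (c \in S0) ->
  a \in S0 \/ (forall q, e b q -> q != v -> q \in S0) ->
  b \in S0 \/ (forall q, e c q -> q != v -> q \in S0) ->
  c \in S0 \/ (forall q, e a q -> q != v -> q \in S0) -> P S0.
Proof.
move=> HC Hab Hbc Qa Qb Qc.
have HF : forall x y, y != v -> Fpair e a b c x y -> (x \in S0) || (y \in S0).
  move=> x y hy; rewrite /Fpair.
  case/orP=> [/andP[/eqP-> /eqP->]//|].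
  case/orP=> [/andP[/eqP-> /eqP->]//|].
  case/orP=> [/andP[/eqP-> E]|].
    by case: Qa => [->//|H]; rewrite (H y E hy) orbT.
  case/orP=> [/andP[/eqP-> E]|/andP[/eqP-> E]].
    by case: Qb => [->//|H]; rewrite (H y E hy) orbT.
  by case: Qc => [->//|H]; rewrite (H y E hy) orbT.
move=> x y hx hy hxy; case/orP=> [E|]; first exact: HC.
case/orP=> [F|F]; first exact: HF.
by rewrite orbC; apply: HF.
Qed.

Lemma P_elim S0 : P S0 -> C1 S0 /\ [/\ (a \in S0) || (b \in S0), (b \in S0) || (c \in S0),
  a \in S0 \/ (forall q, e b q -> q != v -> q \in S0),
  b \in S0 \/ (forall q, e c q -> q != v -> q \in S0) &
  c \in S0 \/ (forall q, e a q -> q != v -> q \in S0)].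
Proof.
move=> HP; split; [|split].
- move=> x y hx hy E; apply: HP => //; last by rewrite E.
  by apply/eqP=> xy; move: E; rewrite xy eirr.
- apply: HP; [exact: av | exact: bv | exact: dab | by rewrite /Fpair !eqxx orbT].
- apply: HP; [exact: bv | exact: cv | exact: dbc | by rewrite /Fpair !eqxx /= !orbT].
- case: (boolP (a \in S0)) => ha; [by left|right] => q E hq.
  have := HP a q av hq.
  have -> : a != q by apply: contraNneq nab => ->; rewrite esym.
  by rewrite (negbTE ha) /Fpair eqxx E /= !orbT; apply.
- case: (boolP (b \in S0)) => ha; [by left|right] => q E hq.
  have := HP b q bv hq.
  have -> : b != q by apply: contraNneq nbc => ->; rewrite esym.
  by rewrite (negbTE ha) /Fpair eqxx E /= !orbT; apply.
- case: (boolP (c \in S0)) => ha; [by left|right] => q E hq.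
  have := HP c q cv hq.
  have -> : c != q by apply: contraNneq nac => ->.
  by rewrite (negbTE ha) /Fpair eqxx E /= !orbT; apply.
Qed.


Lemma dir1 (S : {set T}) : vertex_cover e S -> exists S0, P S0 /\ #|S0| <= #|S|.
Proof.
move=> HS.
have Nin : forall r q, e r q -> (r \in S) = false -> q \in S.
  by move=> r q E hr; have := HS r q E; rewrite hr.
have va : e v a by rewrite Nv eqxx.
have vb : e v b by rewrite Nv eqxx orbT.
have vc : e v c by rewrite Nv eqxx !orbT.
case hv: (v \in S); last first.
  have ha := Nin _ _ va hv; have hb := Nin _ _ vb hv; have hc := Nin _ _ vc hv.
  exists S; split => //; apply: P_intro; rewrite ?ha ?hb ?hc //; try by left.
  by move=> x y _ _; apply: HS.
suff [r Hr] : exists r, P (r |: S :\ v).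
  exists (r |: S :\ v); split=> //; rewrite cardsU1 (@cardsD1 _ v S) hv.
  by case: (r \notin _).
have HC : forall r, C1 (r |: S :\ v).
  move=> r x y hx hy E; rewrite !inE hx hy /=.
  by case/orP: (HS x y E) => ->; rewrite ?orbT.
case ha: (a \in S); case hb: (b \in S); case hc: (c \in S);
 [exists a|exists c|exists b|exists c|exists a|exists a|exists b|exists b];
 (apply: P_intro; [exact: HC|..]);
 repeat match goal with
 | |- is_true (_ || _) => by rewrite !inE ?eqxx ?av ?bv ?cv ?ha ?hb ?hc /= ?orbT
 | |- _ \/ _ => first [ by left; rewrite !inE ?eqxx ?av ?bv ?cv ?ha ?hb ?hc /= ?orbT
                      | by right => q E hq; rewrite !inE hq (Nin _ _ E) ?orbT ]
 end.
Qed.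

Lemma remove_lem (S0 : {set T}) r : r \in S0 -> (forall q, e r q -> q != v -> q \in S0) -> C1 S0 ->
  vertex_cover e (v |: S0 :\ r) /\ #|v |: S0 :\ r| <= #|S0|.
Proof.
move=> hr Hr HC; split; last first.
  by rewrite cardsU1 (@cardsD1 _ r S0) hr; case: (v \notin _).
move=> x y E; rewrite !inE.
case: (eqVneq x v) => [->|xv]; first by rewrite ?eqxx.
case: (eqVneq y v) => [->|yv]; first by rewrite ?eqxx !orbT.
rewrite ?xv ?yv /=.
case: (eqVneq x r) => [xr|xr] /=.
  subst x; have yr : y != r by apply: contraTneq E => ->; rewrite eirr.
  by rewrite ?yr ?Hr ?orbT.
case: (eqVneq y r) => [yr|yr] /=.
  by subst y; rewrite ?Hr ?orbT // esym.
exact: HC.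
Qed.

Lemma dir2 (S0 : {set T}) : P S0 -> exists S, vertex_cover e S /\ #|S| <= #|S0|.
Proof.
case/P_elim=> HC [Hab Hbc Qa Qb Qc].
case ha: (a \in S0) Hab Qa Qc => Hab Qa Qc; case hb: (b \in S0) Hab Hbc Qa Qb => // Hab Hbc Qa Qb;
 case hc: (c \in S0) Hbc Qb Qc => // Hbc Qb Qc.
- exists S0; split => // x y E.
  case: (eqVneq x v) => [xv|xv].
    by subst x; move: E; rewrite Nv => /or3P[] /eqP->; rewrite ?ha ?hb ?hc orbT.
  case: (eqVneq y v) => [yv|yv].
    by subst y; move: E; rewrite esym Nv => /or3P[] /eqP->; rewrite ?ha ?hb ?hc.
  exact: HC.
- case: Qc => // Qc; have [H1 H2] := @remove_lem S0 _ ha Qc HC; by eexists; split; eauto.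
- case: Qb => // Qb; have [H1 H2] := @remove_lem S0 _ hc Qb HC; by eexists; split; eauto.
- case: Qa => // Qa; have [H1 H2] := @remove_lem S0 _ hb Qa HC; by eexists; split; eauto.
- case: Qa => // Qa; have [H1 H2] := @remove_lem S0 _ hb Qa HC; by eexists; split; eauto.
Qed.

End Main.

Lemma indep (T : finType) (e : rel T) (v p q r : T) : symmetric e -> irreflexive e ->
  condA e -> condB e -> p != q -> q != r -> p != r ->
  (forall x, e v x = [|| x == p, x == q | x == r]) -> ~~ e p q.
Proof.
move=> es ei hA hB dpq dqr dpr Nv; apply/negP => epq.
case epr: (e p r).
  apply: hA; exists p, v; split; first by rewrite es Nv eqxx.
  apply/subsetP => x; rewrite /Nc /N !inE Nv => /or3P[] /eqP->;
    by rewrite ?eqxx ?epq ?epr ?orbT.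
case eqr: (e q r).
  apply: hA; exists q, v; split; first by rewrite es Nv eqxx orbT.
  apply/subsetP => x; rewrite /Nc /N !inE Nv => /or3P[] /eqP->;
    by rewrite ?eqxx ?(es q p) ?epq ?eqr ?orbT.
apply: hB; exists v, [set p; q], [set r]; split.
- by apply/setP => x; rewrite /N !inE Nv orbA.
- by rewrite disjoint_sym disjoints1 !inE negb_or eq_sym dpr eq_sym dqr.
- by rewrite cards1 cards2 dpq.
- split.
    move=> x y; rewrite !inE => /orP[]/eqP-> /orP[]/eqP->; rewrite ?eqxx // => _.
    by rewrite es.
  by move=> x y; rewrite !inE => /eqP-> /eqP->; rewrite eqxx.
- move=> c1; rewrite !inE => /orP[]/eqP->.
    have -> : [set c2 in [set r] | ~~ e p c2] = [set r].
      by apply/setP=> x; rewrite !inE; case: eqP => // ->; rewrite epr.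
    by rewrite cards1.
  have -> : [set c2 in [set r] | ~~ e q c2] = [set r].
    by apply/setP=> x; rewrite !inE; case: eqP => // ->; rewrite eqr.
  by rewrite cards1.
Qed.

Lemma distinct3 (T : finType) (x y z : T) : #|[set x; y; z]| = 3 ->
  [/\ x != y, y != z & x != z].
Proof.
move=> H; split; apply/eqP => E.
- have : [set x; y; z] \subset [set y; z].
    by apply/subsetP=> w; rewrite !inE E; case: (w == x); case: (w == y); case: (w == z).
  by move/subset_leq_card; rewrite H cards2; case: (_ != _).
- have : [set x; y; z] \subset [set x; y].
    by apply/subsetP=> w; rewrite !inE E; case: (w == x); case: (w == y); case: (w == z).
  by move/subset_leq_card; rewrite H cards2; case: (_ != _).
- have : [set x; y; z] \subset [set y; z].
    by apply/subsetP=> w; rewrite !inE E; case: (w == x); case: (w == y); case: (w == z).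
  by move/subset_leq_card; rewrite H cards2; case: (_ != _).
Qed.

Theorem proposition6 (T : finType) (e : rel T) (k : nat) (v a b c : T) :
  simple_graph e ->
  condA e ->
  condB e ->
  #|N e v| = 3 ->
  N e v = [set a; b; c] ->
  has_vc e k <-> has_vc (Gprime e v a b c) k.
Proof.
move=> [es ei] hA hB h3 hN.
have Nv : forall x, e v x = [|| x == a, x == b | x == c].
  by move=> x; have := f_equal (fun S : {set T} => x \in S) hN; rewrite /N !inE => ->; rewrite -orbA.
have [dab dbc dac] := @distinct3 _ _ _ _ (etrans (esym (f_equal (fun S : {set T} => #|S|) hN)) h3).
have nab : ~~ e a b by exact: (@indep _ _ v a b c es ei hA hB dab dbc dac Nv).
have nbc : ~~ e b c.
  apply: (@indep _ _ v b c a es ei hA hB dbc ltac:(by rewrite eq_sym dac) ltac:(by rewrite eq_sym dab)).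
  by move=> x; rewrite Nv; case: (x == a); case: (x == b); case: (x == c).
have nac : ~~ e a c.
  apply: (@indep _ _ v a c b es ei hA hB dac ltac:(by rewrite eq_sym dbc) dab).
  by move=> x; rewrite Nv; case: (x == a); case: (x == b); case: (x == c).
split.
- case=> S [HS Hk].
  have [S0 [HP HS0]] := @dir1 _ _ v a b c ei Nv S HS.
  exists [set x : {x : T | x != v} | val x \in S0]; split.
    move=> [x hx] [y hy]; rewrite /Gprime /= !inE => /andP[hxy H].
    exact: HP.
  apply: leq_trans Hk; apply: leq_trans HS0.
  rewrite -(card_imset _ val_inj); apply: subset_leq_card.
  by apply/subsetP => y /imsetP [x]; rewrite inE => hx ->.
- case=> S' [HS' Hk].
  have HP : P _ e v a b c (val @: S').
    move=> x y hx hy hxy H.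
    have Hg : Gprime e v a b c (exist _ x hx) (exist _ y hy) by rewrite /Gprime /= hxy H.
    case/orP: (HS' _ _ Hg) => h; apply/orP; [left|right]; apply/imsetP; by eexists; eauto.
  have [S [HS HSS]] := @dir2 _ _ v a b c es ei Nv nab nbc nac dab dbc _ HP.
  exists S; split => //; rewrite card_imset in HSS; last exact: val_inj.
  exact: leq_trans HSS Hk.
Qed.
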